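(* Let $\Gamma=\langle x,y,z\mid xy^{-1}=yz^{-1},\ xy^{-1}=zx^{-1}\rangle$ with generating set $\Delta=\{x,y,z\}$. Then $W=W_xU_x+W_yU_y+W_zU_z$ is a homogeneous scalar quantum walk on $C_\Delta(\Gamma)$ if and only if, up to a global phase, $W_x=\tfrac13(1+e^{i\phi_1}+e^{i\phi_2})$, $W_y=\tfrac13(1+e^{2\pi i/3}e^{i\phi_1}+e^{-2\pi i/3}e^{i\phi_2})$, $W_z=\tfrac13(1+e^{-2\pi i/3}e^{i\phi_1}+e^{2\pi i/3}e^{i\phi_2})$ for some real $\phi_1,\phi_2$ (with these three values nonzero). In particular such a walk exists.
   Context: The Cayley graph $C_\Delta(\Gamma)$ has vertex set $\Gamma$ and directed edges $(g,g\delta)$, $g\in\Gamma,\delta\in\Delta$. Let $\ell^2(\Gamma)$ have orthonormal basis $\{|g\rangle\}_{g\in\Gamma}$ and for $\delta\in\Gamma$ let $U_\delta|g\rangle=|g\delta\rangle$. A homogeneous scalar quantum walk on $C_\Delta(\Gamma)$ is a unitary operator $W=\sum_{\delta\in\Delta}W_\delta U_\delta$ with all complex coefficients $W_\delta$ nonzero. ''Up to a global phase'' means that all coefficients may be multiplied by a common complex number of modulus one. *)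

(* Defs.v *)
From HB Require Import structures.
From mathcomp Require Import all_boot all_order all_algebra.
From mathcomp Require Import all_classical all_reals.
From mathcomp Require Import esum trigo.
From mathcomp Require Import complex.
From mathcomp Require Import Rstruct.

Set Implicit Arguments.
Unset Strict Implicit.
Unset Printing Implicit Defensive.

Import Order.TTheory GRing.Theory Num.Theory.
Local Open Scope ring_scope.
Local Open Scope complex_scope.

Notation RR := Rdefinitions.R.
Notation CC := (RR[i]).

Record group := Group {
  gcar :> Type;
  gmul : gcar -> gcar -> gcar;
  gone : gcar;
  ginv : gcar -> gcar;
  gmulA : forall a b c, gmul a (gmul b c) = gmul (gmul a b) c;
  gmul1g : forall a, gmul gone a = a;
  gmulVg : forall a, gmul (ginv a) a = gone }.

Definition ghom (G H : group) (f : G -> H) : Prop :=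
  forall u v : G, f (gmul u v) = gmul (f u) (f v).

Definition rels (G : group) (x y z : G) : Prop :=
  gmul x (ginv y) = gmul y (ginv z) /\ gmul x (ginv y) = gmul z (ginv x).

(* (G; x, y, z) is the group presented by < x, y, z | x y^-1 = y z^-1,
   x y^-1 = z x^-1 >: the relations hold, and the universal property of the
   presentation holds (every triple satisfying the relations in any group H
   is the image of (x, y, z) under a unique homomorphism). *)
Definition is_presentation (G : group) (x y z : G) : Prop :=
  rels x y z /\
  forall (H : group) (a b c : H), rels a b c ->
    exists f : G -> H,
      [/\ ghom f, f x = a, f y = b, f z = c &
        forall g : G -> H, ghom g -> g x = a -> g y = b -> g z = c ->
          forall u, g u = f u].

Definition sqn (w : CC) : RR := (@complex.Re RR w) ^+ 2 + (@complex.Im RR w) ^+ 2.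

Definition l2norm2 (G : group) (f : G -> CC) : \bar RR :=
  \esum_(g in [set: {classic (gcar G)}]) (sqn (f g))%:E.

Definition in_l2 (G : group) (f : G -> CC) : Prop := (l2norm2 f < +oo)%E.

Definition unitary_l2 (G : group) (T : (G -> CC) -> (G -> CC)) : Prop :=
  (forall f, in_l2 f -> in_l2 (T f) /\ l2norm2 (T f) = l2norm2 f) /\
  (forall g, in_l2 g -> exists f, in_l2 f /\ T f = g).

(* U_d |g> = |g d>, i.e. (U_d f)(h) = f (h d^-1) *)
Definition Uop (G : group) (d : G) (f : G -> CC) : G -> CC :=
  fun h => f (gmul h (ginv d)).

Definition Wop (G : group) (terms : seq (CC * G)) (f : G -> CC) : G -> CC :=
  fun h => \sum_(p <- terms) p.1 * Uop p.2 f h.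

Definition is_hsqw (G : group) (terms : seq (CC * G)) : Prop :=
  unitary_l2 (Wop terms) /\ all (fun p => p.1 != 0) terms.

Definition expi (t : RR) : CC := (cos t) +i* (sin t).

Definition third : CC := 3^-1.
Definition Wx_form (p1 p2 : RR) : CC := third * (1 + expi p1 + expi p2).
Definition Wy_form (p1 p2 : RR) : CC :=
  third * (1 + expi (2 * pi / 3) * expi p1 + expi (- (2 * pi / 3)) * expi p2).
Definition Wz_form (p1 p2 : RR) : CC :=
  third * (1 + expi (- (2 * pi / 3)) * expi p1 + expi (2 * pi / 3) * expi p2).

(* Main.v *)
Require Import Defs.
From HB Require Import structures.
From mathcomp Require Import all_boot all_order all_algebra.
From mathcomp Require Import all_classical all_reals.
From mathcomp Require Import esum trigo complex Rstruct.
From mathcomp Require Import ring lra.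

Import Order.TTheory GRing.Theory Num.Theory.
Local Open Scope ring_scope.
Local Open Scope complex_scope.
Section Grp.
Variable G : group.
Local Notation gm := (@gmul G).
Local Notation gi := (@ginv G).
Local Notation g1 := (@gone G).

Lemma gmulgV (a : G) : gm a (gi a) = g1.
Proof.
rewrite -[gm a (gi a)]gmul1g -(gmulVg (gi a)) -gmulA (gmulA (gi a) a) gmulVg.
by rewrite gmul1g gmulVg.
Qed.

Lemma gmulg1 (a : G) : gm a g1 = a.
Proof. by rewrite -(gmulVg a) gmulA gmulgV gmul1g. Qed.

Lemma gmulKV (a b : G) : gm (gm a b) (gi b) = a.
Proof. by rewrite -gmulA gmulgV gmulg1. Qed.

Lemma gmulVK (a b : G) : gm (gm a (gi b)) b = a.
Proof. by rewrite -gmulA gmulVg gmulg1. Qed.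

Lemma esum_transl (g0 : G) (F : G -> \bar RR) :
  (\esum_(k in [set: {classic (gcar G)}]) F (gm k g0) =
   \esum_(k in [set: {classic (gcar G)}]) F k)%E.
Proof.
symmetry.
rewrite (@reindex_esum _ {classic (gcar G)} {classic (gcar G)} setT setT (fun k => gm k g0)) //.
rewrite setTT_bijective; exists (fun k => gm k (gi g0)) => k.
  exact: gmulKV.
exact: gmulVK.
Qed.

End Grp.
Arguments gmulgV {G}. Arguments gmulg1 {G}. Arguments gmulKV {G}. Arguments gmulVK {G}. Arguments esum_transl {G}.
Lemma sqnC (w : CC) : (sqn w)%:C = w * conjc w.
Proof. case: w => a b; rewrite /sqn /=. apply/eqP; rewrite eq_complex /=. apply/andP; split; apply/eqP; ring. Qed.

Lemma sqn3C (a b c : CC) : (sqn a + sqn b + sqn c)%:C = a * conjc a + b * conjc b + c * conjc c.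
Proof. rewrite -!sqnC. apply/eqP; rewrite eq_complex /= !addr0 !eqxx. by []. Qed.

Lemma sqn_ge0 (w : CC) : 0 <= sqn w.
Proof. by rewrite /sqn addr_ge0 // sqr_ge0. Qed.

Definition cs (A B C : CC) := A * conjc A + B * conjc B + C * conjc C.
Definition cu (A B C : CC) := A * conjc C + B * conjc A + C * conjc B.

Lemma circ_id (A B C u0 u1 u2 : CC) :
  (sqn (A*u0+B*u1+C*u2) + sqn (A*u1+B*u2+C*u0) + sqn (A*u2+B*u0+C*u1))%:C =
  cs A B C * (sqn u0 + sqn u1 + sqn u2)%:C
  + cu A B C * (u0 * conjc u2 + u1 * conjc u0 + u2 * conjc u1)
  + conjc (cu A B C) * (conjc u0 * u2 + conjc u1 * u0 + conjc u2 * u1).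
Proof.
rewrite /cs /cu !sqn3C !rmorphD !rmorphM /= !conjcK. ring.
Qed.
Local Open Scope ereal_scope.
Lemma triple_eq (x y : \bar RR) : 0 <= x -> 0 <= y -> x + x + x = y + y + y -> x = y.
Proof.
case: x => [x| |]; case: y => [y| |] //=.
move=> _ _; rewrite -!EFinD => -[] h; congr EFin; lra.
Qed.

Lemma esum_point (T : choiceType) (t : T) (v : \bar RR) : 0 <= v ->
  \esum_(k in [set: T]) (if k == t then v else 0) = v.
Proof.
move=> v0; transitivity (\esum_(k in [set t]) (fun _ => v) k); last exact: esum_set1.
rewrite [RHS]esum_mkcond; apply: eq_esum => k _ /=.
case: (eqVneq k t) => [->|kt]; first by rewrite mem_set. by rewrite memNset //; apply/eqP.
Qed.

Lemma esum3 (T : choiceType) (F : T -> \bar RR) (t0 t1 t2 : T) :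
  t0 != t1 -> t0 != t2 -> t1 != t2 -> (forall k, 0 <= F k) ->
  (forall k, k != t0 -> k != t1 -> k != t2 -> F k = 0) ->
  \esum_(k in [set: T]) F k = F t0 + F t1 + F t2.
Proof.
move=> h01 h02 h12 F0 Fz.
transitivity (\esum_(k in [set: T]) ((if k == t0 then F t0 else 0) +
   (if k == t1 then F t1 else 0) + (if k == t2 then F t2 else 0))).
  apply: eq_esum => k _.
  case: (eqVneq k t0) => [->|k0]; first by rewrite (negbTE h01) (negbTE h02) !adde0.
  case: (eqVneq k t1) => [->|k1]; first by rewrite (negbTE h12) add0e adde0.
  case: (eqVneq k t2) => [->|k2]; first by rewrite !add0e.
  by rewrite Fz // !adde0.
rewrite !esumD ?esum_point //.
- by move=> k _; case: ifP.
- by move=> k _; case: ifP.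
- by move=> k _; rewrite adde_ge0 //; case: ifP.
- by move=> k _; case: ifP.
Qed.
Local Close Scope ereal_scope.
Section Walk.
Variables (G : group) (a : G).
Local Notation gm := (@gmul G).
Hypothesis h3 : forall k, gm (gm (gm k a) a) a = k.

Definition Vop (A B C : CC) (f : G -> CC) : G -> CC :=
  fun k => A * f k + B * f (gm k a) + C * f (gm (gm k a) a).

Lemma circ_pt (A B C : CC) (f : G -> CC) k : cs A B C = 1 -> cu A B C = 0 ->
  sqn (Vop A B C f k) + sqn (Vop A B C f (gm k a)) + sqn (Vop A B C f (gm (gm k a) a))
  = sqn (f k) + sqn (f (gm k a)) + sqn (f (gm (gm k a) a)).
Proof.
move=> hs hu; apply: complexI; rewrite /Vop h3 circ_id hs hu rmorph0 /=.
by rewrite mul1r !mul0r !addr0.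
Qed.

Lemma V_iso (A B C : CC) (f : G -> CC) : cs A B C = 1 -> cu A B C = 0 ->
  l2norm2 (Vop A B C f) = l2norm2 f.
Proof.
move=> hs hu; rewrite /l2norm2.
apply: triple_eq; try (apply: esum_ge0 => k _; rewrite lee_fin sqn_ge0 //).
rewrite -{2}(@esum_transl G a (fun k => (sqn (Vop A B C f k))%:E)).
rewrite -{2}(@esum_transl G (gm a a) (fun k => (sqn (Vop A B C f k))%:E)).
rewrite -{2}(@esum_transl G a (fun k => (sqn (f k))%:E)).
rewrite -{2}(@esum_transl G (gm a a) (fun k => (sqn (f k))%:E)).
rewrite -!esumD; try (move=> k _; rewrite ?adde_ge0 ?lee_fin ?sqn_ge0 //).
apply: eq_esum => k _ /=; rewrite !gmulA -!EFinD; congr EFin.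
exact: circ_pt.
Qed.
End Walk.
Arguments Vop {G}.
Lemma expiD (s t : RR) : expi (s + t) = expi s * expi t.
Proof. rewrite /expi trigo.cosD trigo.sinD; apply/eqP; rewrite eq_complex /=. apply/andP; split; apply/eqP; ring. Qed.

Lemma expiN (t : RR) : expi (- t) = conjc (expi t).
Proof. by rewrite /expi trigo.cosN trigo.sinN. Qed.

Lemma expi_unit (t : RR) : expi t * conjc (expi t) = 1.
Proof. by rewrite -sqnC /sqn /= trigo.cos2Dsin2. Qed.

Lemma expi0 : expi 0 = 1.
Proof. by rewrite /expi trigo.cos0 trigo.sin0. Qed.

Definition om : CC := expi (2 * pi / 3).

Lemma om3 : om ^+ 3 = 1.
Proof.
rewrite /om !exprS expr0 mulr1 -!expiD.
have -> : 2 * pi / 3 + (2 * pi / 3 + 2 * pi / 3) = pi *+ 2 :> RR.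
  rewrite mulr2n; field; by [].
by rewrite /expi trigo.cos2pi trigo.sin2pi.
Qed.

Lemma om_neq1 : om != 1.
Proof.
apply/negP => /eqP /(congr1 (@complex.Im RR)) /=.
have : 0 < sin (2 * pi / 3 : RR).
  apply: trigo.sin_gt0_pi; have hp := @trigo.pi_gt0 RR; apply/andP; split; lra.
move=> h e; rewrite e in h; by rewrite ltxx in h.
Qed.

Lemma om2 : om ^+ 2 = - 1 - om.
Proof.
have : (om - 1) * (om ^+ 2 + om + 1) = 0.
  have -> : (om - 1) * (om ^+ 2 + om + 1) = om ^+ 3 - 1 by ring.
  by rewrite om3 subrr.
move/eqP; rewrite mulf_eq0 subr_eq0 (negbTE om_neq1) /= => /eqP h.
apply/eqP; rewrite -subr_eq0; apply/eqP; rewrite -h; ring.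
Qed.

Lemma omc : conjc om = - 1 - om.
Proof.
have h := expi_unit (2 * pi / 3); rewrite -/om in h.
rewrite -om2 -[conjc om]mul1r -om3.
have -> : om ^+ 3 * conjc om = (om * conjc om) * om ^+ 2 by ring.
by rewrite h mul1r.
Qed.

Lemma omN : expi (- (2 * pi / 3)) = - 1 - om.
Proof. by rewrite expiN -omc. Qed.
Lemma expi_surj (e : CC) : e * conjc e = 1 -> exists phi : RR, expi phi = e.
Proof.
move=> he; have hs : sqn e = 1.
  by apply: complexI; rewrite sqnC he.
case: e he hs => a b _; rewrite /sqn /= => hs.
have ha : -1 <= a <= 1 by apply/andP; split; nra.
have hin : a \in `[(-1), 1] by rewrite in_itv /=.
have hsq : Num.sqrt (1 - a ^+ 2) = `|b|.
  by rewrite -sqrtr_sqr; congr Num.sqrt; lra.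
case: (lerP 0 b) => hb.
  exists (trigo.acos a); rewrite /expi trigo.acosK // trigo.sin_acos // hsq.
  by rewrite ger0_norm.
exists (- trigo.acos a); rewrite /expi trigo.cosN trigo.sinN trigo.acosK // trigo.sin_acos // hsq.
by rewrite ltr0_norm // opprK.
Qed.
Lemma conj_third : conjc third = third.
Proof. by rewrite /third fmorphV rmorph_nat. Qed.

Lemma third3 (X : CC) : X = third * (3 * X).
Proof. rewrite /third; field; by []. Qed.

Lemma third9 : third * third * 9 = 1.
Proof. rewrite /third; field; by []. Qed.

Lemma cjD (a b : CC) : conjc (a + b) = conjc a + conjc b. Proof. exact: rmorphD. Qed.
Lemma cjB (a b : CC) : conjc (a - b) = conjc a - conjc b. Proof. exact: rmorphB. Qed.
Lemma cjM (a b : CC) : conjc (a * b) = conjc a * conjc b. Proof. exact: rmorphM. Qed.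
Lemma cjN (a : CC) : conjc (- a) = - conjc a. Proof. exact: rmorphN. Qed.
Lemma cj1 : conjc (1 : CC) = 1. Proof. exact: rmorph1. Qed.
Lemma cj0 : conjc (0 : CC) = 0. Proof. exact: rmorph0. Qed.
Ltac conj_simpl := rewrite ?(cjD, cjB, cjM, cjN, cj1, cj0, conj_third, omc, conjcK).

Lemma circ_forms (c e1 e2 : CC) :
  c * conjc c = 1 -> e1 * conjc e1 = 1 -> e2 * conjc e2 = 1 ->
  cs (c * (third * (1 + e1 + e2))) (c * (third * (1 + om * e1 + (-1 - om) * e2)))
     (c * (third * (1 + (-1 - om) * e1 + om * e2))) = 1 /\
  cu (c * (third * (1 + e1 + e2))) (c * (third * (1 + om * e1 + (-1 - om) * e2)))
     (c * (third * (1 + (-1 - om) * e1 + om * e2))) = 0.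
Proof.
move=> hc h1 h2; have hw := om2.
split.
  have -> : cs (c * (third * (1 + e1 + e2))) (c * (third * (1 + om * e1 + (-1 - om) * e2)))
     (c * (third * (1 + (-1 - om) * e1 + om * e2))) =
    (c * conjc c) * (third * third) * ((1 + e1 + e2) * (1 + conjc e1 + conjc e2) +
    (1 + om * e1 + (-1 - om) * e2) * (1 + (-1 - om) * conjc e1 + om * conjc e2) +
    (1 + (-1 - om) * e1 + om * e2) * (1 + om * conjc e1 + (-1 - om) * conjc e2)).
    rewrite /cs; conj_simpl; ring.
  rewrite hc mul1r.
  have -> : (1 + e1 + e2) * (1 + conjc e1 + conjc e2) +
    (1 + om * e1 + (-1 - om) * e2) * (1 + (-1 - om) * conjc e1 + om * conjc e2) +
    (1 + (-1 - om) * e1 + om * e2) * (1 + om * conjc e1 + (-1 - om) * conjc e2) = 9.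
    ring: hw h1 h2.
  exact: third9.
have -> : cu (c * (third * (1 + e1 + e2))) (c * (third * (1 + om * e1 + (-1 - om) * e2)))
     (c * (third * (1 + (-1 - om) * e1 + om * e2))) =
  (c * conjc c) * (third * third) * ((1 + e1 + e2) * (1 + om * conjc e1 + (-1 - om) * conjc e2) +
  (1 + om * e1 + (-1 - om) * e2) * (1 + conjc e1 + conjc e2) +
  (1 + (-1 - om) * e1 + om * e2) * (1 + (-1 - om) * conjc e1 + om * conjc e2)).
  rewrite /cu; conj_simpl; ring.
rewrite hc mul1r.
have -> : (1 + e1 + e2) * (1 + om * conjc e1 + (-1 - om) * conjc e2) +
  (1 + om * e1 + (-1 - om) * e2) * (1 + conjc e1 + conjc e2) +
  (1 + (-1 - om) * e1 + om * e2) * (1 + (-1 - om) * conjc e1 + om * conjc e2) = 0.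
  ring: hw h1 h2.
by rewrite mulr0.
Qed.
Lemma circ_to_forms (A B C : CC) : cs A B C = 1 -> cu A B C = 0 ->
  exists c e1 e2 : CC, [/\ c * conjc c = 1, e1 * conjc e1 = 1, e2 * conjc e2 = 1 &
    [/\ A = c * (third * (1 + e1 + e2)),
    B = c * (third * (1 + om * e1 + (-1 - om) * e2)) &
    C = c * (third * (1 + (-1 - om) * e1 + om * e2))]].
Proof.
move=> hs hu; have hw := om2; have huc : conjc (cu A B C) = 0 by rewrite hu cj0.
have u0 : (A + B + C) * conjc (A + B + C) = 1.
  have -> : (A + B + C) * conjc (A + B + C) = cs A B C + conjc (cu A B C) + cu A B C.
    by rewrite /cs /cu; conj_simpl; ring.
  by rewrite hs huc hu !addr0.
have u1 : (A + B * om + C * (-1 - om)) * conjc (A + B * om + C * (-1 - om)) = 1.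
  have -> : (A + B * om + C * (-1 - om)) * conjc (A + B * om + C * (-1 - om)) =
    cs A B C + (-1 - om) * conjc (cu A B C) + om * cu A B C.
    by rewrite /cs /cu; conj_simpl; ring: hw.
  by rewrite hs huc hu !mulr0 !addr0.
have u2 : (A + B * (-1 - om) + C * om) * conjc (A + B * (-1 - om) + C * om) = 1.
  have -> : (A + B * (-1 - om) + C * om) * conjc (A + B * (-1 - om) + C * om) =
    cs A B C + om * conjc (cu A B C) + (-1 - om) * cu A B C.
    by rewrite /cs /cu; conj_simpl; ring: hw.
  by rewrite hs huc hu !mulr0 !addr0.
have e3A : 3 * A = (A + B + C) + (A + B * om + C * (-1 - om)) + (A + B * (-1 - om) + C * om).
  by ring.
have e3B : 3 * B = (A + B + C) + (-1 - om) * (A + B * om + C * (-1 - om)) + om * (A + B * (-1 - om) + C * om).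
  by ring: hw.
have e3C : 3 * C = (A + B + C) + om * (A + B * om + C * (-1 - om)) + (-1 - om) * (A + B * (-1 - om) + C * om).
  by ring: hw.
move: u0 u1 u2 e3A e3B e3C.
move: (A + B + C) (A + B * om + C * (-1 - om)) (A + B * (-1 - om) + C * om) => L0 L1 L2.
move=> u0 u1 u2 e3A e3B e3C.
exists L0, (L2 * conjc L0), (L1 * conjc L0); split => //.
- rewrite cjM conjcK.
  have -> : L2 * conjc L0 * (conjc L2 * L0) = (L2 * conjc L2) * (L0 * conjc L0) by ring.
  by rewrite u2 u0 mulr1.
- rewrite cjM conjcK.
  have -> : L1 * conjc L0 * (conjc L1 * L0) = (L1 * conjc L1) * (L0 * conjc L0) by ring.
  by rewrite u1 u0 mulr1.
split.
- rewrite {1}(third3 A) e3A.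
  have -> : L0 * (third * (1 + L2 * conjc L0 + L1 * conjc L0)) =
    third * (L0 + (L0 * conjc L0) * (L2 + L1)) by ring.
  by rewrite u0; ring.
- rewrite {1}(third3 B) e3B.
  have -> : L0 * (third * (1 + om * (L2 * conjc L0) + (-1 - om) * (L1 * conjc L0))) =
    third * (L0 + (L0 * conjc L0) * (om * L2 + (-1 - om) * L1)) by ring.
  by rewrite u0; ring.
- rewrite {1}(third3 C) e3C.
  have -> : L0 * (third * (1 + (-1 - om) * (L2 * conjc L0) + om * (L1 * conjc L0))) =
    third * (L0 + (L0 * conjc L0) * ((-1 - om) * L2 + om * L1)) by ring.
  by rewrite u0; ring.
Qed.
Section Walk2.
Variables (G : group) (a : G).
Local Notation gm := (@gmul G).
Local Notation g1 := (@gone G).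
Local Notation cG := {classic (gcar G)}.
Hypothesis h3 : forall k, gm (gm (gm k a) a) a = k.
Hypothesis ha : a <> g1.

Lemma V_inv (A B C : CC) (g : G -> CC) k : cs A B C = 1 -> cu A B C = 0 ->
  Vop a A B C (Vop a (conjc A) (conjc C) (conjc B) g) k = g k.
Proof.
move=> hs hu; rewrite /Vop !h3.
have -> : A * (conjc A * g k + conjc C * g (gm k a) + conjc B * g (gm (gm k a) a)) +
  B * (conjc A * g (gm k a) + conjc C * g (gm (gm k a) a) + conjc B * g k) +
  C * (conjc A * g (gm (gm k a) a) + conjc C * g k + conjc B * g (gm k a)) =
  cs A B C * g k + cu A B C * g (gm k a) + conjc (cu A B C) * g (gm (gm k a) a).
  by rewrite /cs /cu; conj_simpl; ring.
by rewrite hs hu cj0 !mul0r !addr0 mul1r.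
Qed.

Definition tf (u0 u1 u2 : CC) (k : cG) : CC :=
  if k == g1 then u0 else if k == a then u1 else if k == gm a a then u2 else 0.

Lemma g_rcancel (u v : G) : gm u a = gm v a -> u = v.
Proof. by move=> e; rewrite -(gmulKV u a) e gmulKV. Qed.

Lemma a3 : gm (gm a a) a = g1.
Proof. by have := h3 g1; rewrite gmul1g. Qed.

Lemma d01 : (g1 : cG) != a.
Proof. by apply/eqP => e; apply: ha. Qed.
Lemma d02 : (g1 : cG) != gm a a.
Proof.
apply/eqP => e; apply: ha; have := a3; rewrite -e gmul1g => ->; by [].
Qed.
Lemma d12 : (a : cG) != gm a a.
Proof.
apply/eqP => e; apply: ha; have h := a3; rewrite -e -e in h; exact: h.
Qed.

Lemma rho_out (k : cG) : k != g1 -> k != a -> k != gm a a ->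
  [/\ (gm k a : cG) != g1, (gm k a : cG) != a & (gm k a : cG) != gm a a].
Proof.
move=> k0 k1 k2; split; apply/eqP => e.
- move/eqP: k2; apply; apply: g_rcancel; by rewrite e a3.
- move/eqP: k0; apply; apply: g_rcancel; by rewrite e gmul1g.
- move/eqP: k1; apply; exact: g_rcancel.
Qed.

Lemma sqn0 : sqn 0 = 0.
Proof. by rewrite /sqn /= expr0n addr0. Qed.

Lemma n10 : ((a : cG) == g1) = false. Proof. by rewrite eq_sym (negbTE d01). Qed.
Lemma n20 : ((gm a a : cG) == g1) = false. Proof. by rewrite eq_sym (negbTE d02). Qed.
Lemma n21 : ((gm a a : cG) == a) = false. Proof. by rewrite eq_sym (negbTE d12). Qed.

Lemma tf_norm u0 u1 u2 : l2norm2 (tf u0 u1 u2) = (sqn u0 + sqn u1 + sqn u2)%:E.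
Proof.
rewrite /l2norm2 (@esum3 _ _ _ _ _ d01 d02 d12).
- by rewrite /tf eqxx n10 n20 n21 !eqxx !EFinD.
- by move=> k; rewrite lee_fin sqn_ge0.
- by move=> k k0 k1 k2; rewrite /tf (negbTE k0) (negbTE k1) (negbTE k2) sqn0.
Qed.

Lemma tf_l2 u0 u1 u2 : in_l2 (tf u0 u1 u2).
Proof. by rewrite /in_l2 tf_norm ltry. Qed.

Lemma Vtf_norm A B C u0 u1 u2 : l2norm2 (Vop a A B C (tf u0 u1 u2)) =
  (sqn (A*u0+B*u1+C*u2) + sqn (A*u1+B*u2+C*u0) + sqn (A*u2+B*u0+C*u1))%:E.
Proof.
have t0 : tf u0 u1 u2 g1 = u0 by rewrite /tf eqxx.
have t1 : tf u0 u1 u2 a = u1 by rewrite /tf n10 eqxx.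
have t2 : tf u0 u1 u2 (gm a a) = u2 by rewrite /tf n20 n21 eqxx.
rewrite /l2norm2 (@esum3 _ _ _ _ _ d01 d02 d12).
- by rewrite /Vop !gmul1g a3 gmul1g t0 t1 t2 !EFinD.
- by move=> k; rewrite lee_fin sqn_ge0.
- move=> k k0 k1 k2; have [r0 r1 r2] := rho_out k k0 k1 k2.
  have [s0 s1 s2] := rho_out (gm k a) r0 r1 r2.
  by rewrite /Vop /tf (negbTE k0) (negbTE k1) (negbTE k2) (negbTE r0) (negbTE r1)
    (negbTE r2) (negbTE s0) (negbTE s1) (negbTE s2) !mulr0 !addr0 sqn0.
Qed.

End Walk2.
Lemma cji : conjc 'i%C = - 'i%C :> CC.
Proof. by apply/eqP; rewrite eq_complex /= oppr0 !eqxx. Qed.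

Lemma extract (A B C : CC) :
  (forall u0 u1 u2 : CC, sqn (A*u0+B*u1+C*u2) + sqn (A*u1+B*u2+C*u0) + sqn (A*u2+B*u0+C*u1)
     = sqn u0 + sqn u1 + sqn u2) -> cs A B C = 1 /\ cu A B C = 0.
Proof.
move=> H.
have E : forall u0 u1 u2 : CC, cs A B C * (u0 * conjc u0 + u1 * conjc u1 + u2 * conjc u2)
  + cu A B C * (u0 * conjc u2 + u1 * conjc u0 + u2 * conjc u1)
  + conjc (cu A B C) * (conjc u0 * u2 + conjc u1 * u0 + conjc u2 * u1)
  = u0 * conjc u0 + u1 * conjc u1 + u2 * conjc u2.
  by move=> u0 u1 u2; rewrite -[RHS]sqn3C -H circ_id sqn3C.
move: E; move: (cs A B C) (cu A B C) => s t E.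
have hi : 'i%C ^+ 2 = -1 :> CC by exact: sqr_i.
have h1 := E 1 0 0; have h2 := E 1 0 1; have h3 := E 1 0 'i%C.
rewrite ?cj1 ?cj0 in h1 h2; rewrite ?cj1 ?cj0 ?cji in h3.
have hs : s = 1.
  transitivity (s * (1 * 1 + 0 * 0 + 0 * 0) + t * (1 * 0 + 0 * 1 + 0 * 0)
    + conjc t * (1 * 0 + 0 * 1 + 0 * 0)); first by ring.
  by rewrite h1; ring.
split => //.
have h2t : t + conjc t = 0.
  transitivity ((s * (1 * 1 + 0 * 0 + 1 * 1) + t * (1 * 1 + 0 * 1 + 1 * 0)
    + conjc t * (1 * 1 + 0 * 1 + 1 * 0)) - (1 * 1 + 0 * 0 + 1 * 1)); first by rewrite hs; ring.
  by rewrite h2; ring.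
have h3t : t - conjc t = 0.
  transitivity ('i%C * ((s * (1 * 1 + 0 * 0 + 'i%C * - 'i%C) + t * (1 * - 'i%C + 0 * 1 + 'i%C * 0)
    + conjc t * (1 * 'i%C + 0 * 1 + - 'i%C * 0)) - (1 * 1 + 0 * 0 + 'i%C * - 'i%C))); first by rewrite hs; ring: hi.
  by rewrite h3; ring.
have : 2 * t = 0 by rewrite -[RHS](addr0 0) -{1}h2t -{1}h3t; ring.
by move/eqP; rewrite mulf_eq0 pnatr_eq0 /= => /eqP.
Qed.
Arguments tf {G}.

Lemma hy_fact (G : group) (x y h : G) :
  gmul h (ginv y) = gmul (gmul h (ginv x)) (gmul x (ginv y)).
Proof. by rewrite gmulA gmulVK. Qed.

Lemma haa_fact (G : group) (x y z : G) : gmul x (ginv y) = gmul y (ginv z) ->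
  gmul (gmul x (ginv y)) (gmul x (ginv y)) = gmul x (ginv z).
Proof. by move=> H1; rewrite {2}H1 gmulA gmulVK. Qed.

Lemma hz_fact (G : group) (x y z h : G) : gmul x (ginv y) = gmul y (ginv z) ->
  gmul h (ginv z) = gmul (gmul (gmul h (ginv x)) (gmul x (ginv y))) (gmul x (ginv y)).
Proof. by move=> H1; rewrite -gmulA (@haa_fact _ _ _ _ H1) gmulA gmulVK. Qed.

Lemma h3_fact (G : group) (x y z : G) : gmul x (ginv y) = gmul y (ginv z) ->
  gmul x (ginv y) = gmul z (ginv x) ->
  forall k, gmul (gmul (gmul k (gmul x (ginv y))) (gmul x (ginv y))) (gmul x (ginv y)) = k.
Proof.
move=> H1 H2 k.
have -> : forall a : G, gmul (gmul (gmul k a) a) a = gmul k (gmul (gmul a a) a).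
  by move=> a; rewrite !gmulA.
rewrite (@haa_fact _ _ _ _ H1) H2 (gmulA (gmul x (ginv z))) gmulVK gmulgV; exact: gmulg1.
Qed.

Definition Z3g : group :=
  @Defs.Group 'Z_3 (fun u v => u + v) 0 (fun u => - u) (@addrA _) (@add0r _) (@addNr _).

Lemma WE (G : group) (x y z : G) (Wx Wy Wz : CC) (f : G -> CC) :
  gmul x (ginv y) = gmul y (ginv z) ->
  Wop [:: (Wx, x); (Wy, y); (Wz, z)] f =
  (fun h => Vop (gmul x (ginv y)) Wx Wy Wz f (gmul h (ginv x))).
Proof.
move=> H1; apply: funext => h.
rewrite /Wop !big_cons big_nil /Uop /Vop /= addr0 addrA.
by rewrite (@hy_fact _ x y h) (@hz_fact _ x y z h H1).
Qed.

Lemma l2tr (G : group) (d : G) (F : G -> CC) :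
  l2norm2 (fun h => F (gmul h d)) = l2norm2 F.
Proof. exact: (esum_transl d (fun k => (sqn (F k))%:E)). Qed.

Lemma c_neq0 (c : CC) : c * conjc c = 1 -> c != 0.
Proof. by move=> hc; apply/eqP => c0; move: hc; rewrite c0 mul0r => /eqP; rewrite eq_sym oner_eq0. Qed.

Lemma three_neq0 : (3 : CC) != 0.
Proof. by rewrite pnatr_eq0. Qed.

Lemma third_Q (Q : CC) : third * Q = 0 -> Q = 0.
Proof. by move=> e; rewrite (third3 Q) mulrCA e mulr0. Qed.
Arguments h3_fact {G x y z}.
Arguments WE {G x y z Wx Wy Wz f}.
Arguments l2tr {G}.
Theorem mainTheorem4 :
  forall (G : group) (x y z : G), is_presentation x y z ->
  (forall Wx Wy Wz : CC,
     is_hsqw [:: (Wx, x); (Wy, y); (Wz, z)] <->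
     exists (c : CC) (phi1 phi2 : RR),
       sqn c = 1 /\
       Wx_form phi1 phi2 != 0 /\ Wy_form phi1 phi2 != 0 /\ Wz_form phi1 phi2 != 0 /\
       Wx = c * Wx_form phi1 phi2 /\
       Wy = c * Wy_form phi1 phi2 /\
       Wz = c * Wz_form phi1 phi2)
  /\ (exists Wx Wy Wz : CC, is_hsqw [:: (Wx, x); (Wy, y); (Wz, z)]).
Proof.
move=> G x y z [hrel huniv]; case: (hrel) => H1 H2.
have h3 := h3_fact H1 H2.
have ha : gmul x (ginv y) <> @gone G.
  move=> e.
  have exy : x = y by rewrite -(gmulVK x y) e gmul1g.
  have hr3 : rels (0 : Z3g) 1 2 by split; apply/eqP.
  have [f [_ fx fy _ _]] := huniv Z3g 0 1 2 hr3.
  by move: fx; rewrite exy fy => /eqP.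
have fx : forall p1 p2, Wx_form p1 p2 = third * (1 + expi p1 + expi p2) by [].
have fy : forall p1 p2, Wy_form p1 p2 = third * (1 + om * expi p1 + (-1 - om) * expi p2).
  by move=> p1 p2; rewrite /Wy_form -/om omN.
have fz : forall p1 p2, Wz_form p1 p2 = third * (1 + (-1 - om) * expi p1 + om * expi p2).
  by move=> p1 p2; rewrite /Wz_form -/om omN.
have IFF : forall Wx Wy Wz : CC,
     is_hsqw [:: (Wx, x); (Wy, y); (Wz, z)] <->
     exists (c : CC) (phi1 phi2 : RR),
       sqn c = 1 /\
       Wx_form phi1 phi2 != 0 /\ Wy_form phi1 phi2 != 0 /\ Wz_form phi1 phi2 != 0 /\
       Wx = c * Wx_form phi1 phi2 /\
       Wy = c * Wy_form phi1 phi2 /\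
       Wz = c * Wz_form phi1 phi2.
  move=> Wx Wy Wz; split.
  - case=> [[iso surj]] /= /and4P [nx ny nz _].
    have [hs hu] : cs Wx Wy Wz = 1 /\ cu Wx Wy Wz = 0.
      apply: extract => u0 u1 u2.
      have [_ e] := iso _ (@tf_l2 G _ h3 ha u0 u1 u2).
      move: e; rewrite (WE H1) l2tr (@Vtf_norm G _ h3 ha) (@tf_norm G _ h3 ha).
      by case.
    have [c [e1 [e2 [hc he1 he2 [hA hB hC]]]]] := @circ_to_forms _ _ _ hs hu.
    have [p1 hp1] := @expi_surj _ he1; have [p2 hp2] := @expi_surj _ he2.
    exists c, p1, p2; rewrite fx fy fz hp1 hp2.
    split; first by apply: complexI; rewrite sqnC hc.
    split; first by apply/eqP => e0; move/eqP: nx; apply; rewrite hA e0 mulr0.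
    split; first by apply/eqP => e0; move/eqP: ny; apply; rewrite hB e0 mulr0.
    split; first by apply/eqP => e0; move/eqP: nz; apply; rewrite hC e0 mulr0.
    by [].
  - case=> c [p1 [p2 [hc [nx [ny [nz [eA [eB eC]]]]]]]].
    have hc' : c * conjc c = 1 by rewrite -sqnC hc.
    have [hs hu] := @circ_forms _ _ _ hc' (expi_unit p1) (expi_unit p2).
    rewrite -(fx p1 p2) -(fy p1 p2) -(fz p1 p2) -eA -eB -eC in hs hu.
    split; last first.
      have c0 := @c_neq0 _ hc'.
      rewrite /= eA eB eC; apply/and4P; split => //; exact: mulf_neq0.
    split.
      move=> f hf; rewrite /in_l2 (WE H1) l2tr (@V_iso G _ h3 _ _ _ f hs hu); by split.
    move=> g hg.
    have hs' : cs (conjc Wx) (conjc Wz) (conjc Wy) = 1.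
      by rewrite -hs /cs !conjcK; ring.
    have hu' : cu (conjc Wx) (conjc Wz) (conjc Wy) = 0.
      have -> : cu (conjc Wx) (conjc Wz) (conjc Wy) = cu Wx Wy Wz.
        by rewrite /cu; conj_simpl; ring.
      by rewrite hu.
    exists (Vop (gmul x (ginv y)) (conjc Wx) (conjc Wz) (conjc Wy) (fun k => g (gmul k x))).
    split.
      by rewrite /in_l2 (@V_iso G _ h3 _ _ _ _ hs' hu') (l2tr x g).
    rewrite (WE H1); apply: funext => h.
    by rewrite (@V_inv G _ h3 _ _ _ _ _ hs hu) gmulVK.
split; first exact: IFF.
have hw := om2.
exists (Wx_form (2 * pi / 3) 0), (Wy_form (2 * pi / 3) 0), (Wz_form (2 * pi / 3) 0).
apply/IFF; exists 1, (2 * pi / 3), 0.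
rewrite fx fy fz expi0 -/om !mul1r.
split; first by rewrite /sqn /= expr1n expr0n addr0.
have n3 := three_neq0.
split.
  apply/eqP => /third_Q e0; move/eqP: n3; apply.
  transitivity (- (om - 1) * (1 + om + 1)); first by ring: hw.
  by rewrite e0 mulr0.
split.
  apply/eqP => /third_Q e0; move/eqP: n3; apply.
  transitivity ((1 + 2 * om) * (1 + om * om + (-1 - om) * 1)); first by ring: hw.
  by rewrite e0 mulr0.
split.
  apply/eqP => /third_Q e0; move/eqP: n3; apply.
  transitivity (- (om - 1) * (1 + (-1 - om) * om + om * 1)); first by ring: hw.
  by rewrite e0 mulr0.
by [].
Qed.
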